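(* Let $c>0$, $\alpha\ge 0$, and let $s_{\alpha,c}:\mathbb R\to[0,1]$ be the SIGTRON function defined below. For every $n\in\{1,2,3,\dots\}$ and every $\alpha\in\left(1-\frac1n,\,1+\frac1n\right)$, the $n$-th derivative of $s_{\alpha,c}$ exists and is continuous on $\mathbb R$, and it is given by $$\nabla^n s_{\alpha,c}(x)=\begin{cases}\sum_{k=1}^n F_{n,k}(x) & \text{if } x\in\mathrm{dom}(\sigma_{\alpha,c}),\\ 0 & \text{otherwise,}\end{cases}$$ where $$F_{n,k}(x)=A_{n,k}\,\frac{c\,\big(\exp_{\alpha,c}(-x)\big)^{k-n(1-\alpha)}}{\big(c+\exp_{\alpha,c}(-x)\big)^{k+1}},\qquad A_{n,k}=(-1)^{n+k}\,k!\sum_{l=0}^n {\left[n \atop l\right]}{\left\{ l \atop k \right\}}(\alpha-1)^{n-l}.$$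
   Context: For $c>0$ and $\alpha\ge 0$ put $c_\alpha=\frac{1}{\alpha-1}c^{1-\alpha}$ (for $\alpha\ne1$). The extended exponential function is $\exp_{\alpha,c}(x)=c\exp(x)$ if $\alpha=1$ and $\exp_{\alpha,c}(x)=c\left(1-\frac{x}{c_\alpha}\right)^{1/(1-\alpha)}$ otherwise, on the restricted domain $\mathrm{dom}(\exp_{\alpha,c})=\mathbb R$ if $\alpha=1$, $\mathbb R_{\ge c_\alpha}=\{x\ge c_\alpha\}$ if $0\le\alpha<1$, and $\mathbb R_{<c_\alpha}$ if $\alpha>1$. The extended asymmetric sigmoid is $\sigma_{\alpha,c}(x)=\frac{c}{c+\exp_{\alpha,c}(-x)}$ with domain $\mathrm{dom}(\sigma_{\alpha,c})=\mathbb R$ if $\alpha=1$, $\{x\le -c_\alpha\}$ if $0\le\alpha<1$, and $\{x\ge -c_\alpha\}$ if $\alpha>1$ (where for $\alpha>1$ one sets $\sigma_{\alpha,c}(-c_\alpha)=\lim_{x\searrow -c_\alpha}\sigma_{\alpha,c}(x)=0$). SIGTRON is $s_{\alpha,c}(x)=\sigma_{\alpha,c}(x)$ if $x\in\mathrm{dom}(\sigma_{\alpha,c})$ and $s_{\alpha,c}(x)=\sigma_P(x)$ otherwise, where $\sigma_P(x)=1$ if $x\ge0$ and $0$ otherwise. ${\left[n \atop l\right]}$ denotes the (unsigned) Stirling number of the first kind, with recurrence ${\left[n \atop l\right]}=(n-1){\left[n-1 \atop l\right]}+{\left[n-1 \atop l-1\right]}$, and ${\left\{ l \atop k \right\}}$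 the Stirling number of the second kind, with recurrence ${\left\{ l \atop k \right\}}=k{\left\{ l-1 \atop k \right\}}+{\left\{ l-1 \atop k-1 \right\}}$; conventions ${\left\{0\atop0\right\}}={\left[0\atop0\right]}=1$, ${\left\{a\atop0\right\}}={\left[a\atop0\right]}=0$ for $a\ge1$, and both vanish when the lower index exceeds the upper. The convention $0^0=1$ is used in $(\alpha-1)^{n-l}$. *)

(* Defs.v *)
From Stdlib Require Import Reals Lra Lia.
From Coquelicot Require Import Coquelicot.
Open Scope R_scope.

(* Real power b^e with the convention 0^e = 0 (used only for e > 0 at b = 0). *)
Definition rpow (b e : R) : R :=
  if Rlt_dec 0 b then Rpower b e else 0.

Definition calpha (a c : R) : R := 1 / (a - 1) * Rpower c (1 - a).

Definition expac (a c x : R) : R :=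
  if Req_EM_T a 1 then c * exp x
  else c * rpow (1 - x / calpha a c) (1 / (1 - a)).

Definition in_dom (a c x : R) : bool :=
  if Req_EM_T a 1 then true
  else if Rlt_dec a 1 then (if Rle_dec x (- calpha a c) then true else false)
  else (if Rle_dec (- calpha a c) x then true else false).

(* extended asymmetric sigmoid; for alpha > 1, sigma(-c_alpha) := 0 (the limit) *)
Definition sigma_ac (a c x : R) : R :=
  if Rlt_dec 1 a then
    (if Req_EM_T x (- calpha a c) then 0 else c / (c + expac a c (- x)))
  else c / (c + expac a c (- x)).

Definition heaviside (x : R) : R := if Rle_dec 0 x then 1 else 0.

Definition sigtron (a c x : R) : R :=
  if in_dom a c x then sigma_ac a c x else heaviside x.

Fixpoint stir1 (n l : nat) : nat :=
  match n, l with
  | O, O => 1%nat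
  | O, S _ => 0%nat
  | S _, O => 0%nat
  | S n', S l' => (n' * stir1 n' (S l') + stir1 n' l')%nat
  end.

Fixpoint stir2 (l k : nat) : nat :=
  match l, k with
  | O, O => 1%nat
  | O, S _ => 0%nat
  | S _, O => 0%nat
  | S l', S k' => (S k' * stir2 l' (S k') + stir2 l' k')%nat
  end.

Definition Acoef (a : R) (n k : nat) : R :=
  (-1) ^ (n + k) * INR (Stdlib.Arith.Factorial.fact k) *
  sum_f_R0 (fun l => INR (stir1 n l) * INR (stir2 l k) * (a - 1) ^ (n - l)) n.

Definition Fnk (a c : R) (n k : nat) (x : R) : R :=
  Acoef a n k * (c * rpow (expac a c (- x)) (INR k - INR n * (1 - a)))
  / (c + expac a c (- x)) ^ (k + 1).

(* At the boundary point x = -c_alpha for alpha > 1, where exp_{alpha,c}(-x)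
   is infinite, the value is the limit of the formula, namely 0. *)
Definition nth_deriv_formula (a c : R) (n : nat) (x : R) : R :=
  if in_dom a c x then
    (if Rlt_dec 1 a then
       (if Req_EM_T x (- calpha a c) then 0
        else sum_f_R0 (fun j => Fnk a c n (S j) x) (n - 1))
     else sum_f_R0 (fun j => Fnk a c n (S j) x) (n - 1))
  else 0.

(* Main.v *)
Require Import Defs.
From Stdlib Require Import Reals Lra Lia.
From Coquelicot Require Import Coquelicot.
Open Scope R_scope.

Lemma is_derive_eq (f : R -> R) x l l' : is_derive f x l -> l = l' -> is_derive f x l'.
Proof. intros H ->; exact H. Qed.

Lemma dplus (f g : R -> R) x df dg : is_derive f x df -> is_derive g x dg ->
  is_derive (fun y => f y + g y) x (df + dg).
Proof. intros; now apply (is_derive_plus f g). Qed.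

Lemma dmult (f g : R -> R) x df dg : is_derive f x df -> is_derive g x dg ->
  is_derive (fun y => f y * g y) x (df * g x + f x * dg).
Proof. intros; apply (is_derive_mult f g); auto. intros; apply Rmult_comm. Qed.

Lemma dcomp (f g : R -> R) x df dg : is_derive f (g x) df -> is_derive g x dg ->
  is_derive (fun y => f (g y)) x (dg * df).
Proof. intros; now apply (is_derive_comp f g). Qed.

Lemma dconst (k : R) x : is_derive (fun _ => k) x 0.
Proof. apply (is_derive_const k). Qed.

Lemma ball_R (x e y : R) : ball x e y <-> Rabs (y - x) < e.
Proof. unfold ball; simpl; unfold AbsRing_ball, abs, minus, plus, opp; simpl. tauto. Qed.

Lemma locally_R (x : R) (P : R -> Prop) (d : R) : 0 < d ->
  (forall y, Rabs (y - x) < d -> P y) -> locally x P.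
Proof. intros Hd H. exists (mkposreal d Hd). intros y Hy. apply H. now apply ball_R. Qed.

Lemma rpow_pos b e : 0 < b -> rpow b e = Rpower b e.
Proof. intros; unfold rpow; destruct (Rlt_dec 0 b); [auto|lra]. Qed.

Lemma rpow_ge0 b e : 0 <= rpow b e.
Proof. unfold rpow; destruct (Rlt_dec 0 b); [unfold Rpower; left; apply exp_pos|lra]. Qed.

Lemma d_rpow m e0 : 0 < e0 -> is_derive (fun e => rpow e m) e0 (m * rpow e0 (m - 1)).
Proof.
  intros He. rewrite rpow_pos by auto.
  apply is_derive_ext_loc with (fun e => Rpower e m).
  - apply locally_R with e0; auto. intros y Hy. apply Rabs_def2 in Hy.
    rewrite rpow_pos; auto; lra.
  - apply is_derive_Reals. now apply derivable_pt_lim_power.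
Qed.

Lemma Rpower_pos' b e : 0 < Rpower b e.
Proof. unfold Rpower; apply exp_pos. Qed.

Lemma stir1_big n l : (n < l)%nat -> stir1 n l = 0%nat.
Proof.
  revert l; induction n; intros l H; destruct l; simpl; try lia; auto.
  rewrite !IHn; lia.
Qed.

Lemma stir2_big l k : (l < k)%nat -> stir2 l k = 0%nat.
Proof.
  revert k; induction l; intros k H; destruct k; simpl; try lia; auto.
  rewrite !IHl; lia.
Qed.

Definition Ssum (a : R) n k :=
  sum_f_R0 (fun l => INR (stir1 n l) * INR (stir2 l k) * (a - 1) ^ (n - l)) n.

Lemma Ssum_rec a n k :
  Ssum a (S n) k = (INR k + INR n * (a - 1)) * Ssum a n k +
    match k with O => 0 | S k' => Ssum a n k' end.
Proof.
  unfold Ssum. rewrite decomp_sum by lia. simpl pred.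
  replace (INR (stir1 (S n) 0) * INR (stir2 0 k) * (a - 1) ^ (S n - 0)) with 0
    by (simpl; ring).
  rewrite Rplus_0_l.
  rewrite (sum_eq _ (fun i => INR n * INR (stir1 n (S i)) * INR (stir2 (S i) k) * (a-1)^(S n - S i)
     + INR (stir1 n i) * INR (stir2 (S i) k) * (a - 1) ^ (n - i))).
  2:{ intros i Hi. simpl stir1. rewrite plus_INR, mult_INR. simpl (S n - S i)%nat. ring. }
  rewrite sum_plus.
  replace ((INR k + INR n * (a - 1)) * sum_f_R0 (fun l : nat => INR (stir1 n l) * INR (stir2 l k) * (a - 1) ^ (n - l)) n +
   match k with | 0%nat => 0 | S k' => sum_f_R0 (fun l : nat => INR (stir1 n l) * INR (stir2 l k') * (a - 1) ^ (n - l)) n end)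
  with (INR n * (a - 1) * sum_f_R0 (fun l : nat => INR (stir1 n l) * INR (stir2 l k) * (a - 1) ^ (n - l)) n +
   (INR k * sum_f_R0 (fun l : nat => INR (stir1 n l) * INR (stir2 l k) * (a - 1) ^ (n - l)) n +
   match k with | 0%nat => 0 | S k' => sum_f_R0 (fun l : nat => INR (stir1 n l) * INR (stir2 l k') * (a - 1) ^ (n - l)) n end)) by ring.
  f_equal.
  -
    destruct n as [|n'].
    + simpl. ring.
    + rewrite tech5. rewrite (stir1_big (S n') (S (S n'))) by lia.
      rewrite (decomp_sum _ (S n')) by lia. simpl pred.
      simpl (stir1 (S n') 0).
      replace (INR (S n') * INR 0 * INR (stir2 (S (S n')) k) * (a - 1) ^ (S (S n') - S (S n'))) with 0 by (simpl; ring).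
      replace (INR 0 * INR (stir2 0 k) * (a - 1) ^ (S n' - 0)) with 0 by (simpl; ring).
      rewrite Rplus_0_r, Rplus_0_l.
      rewrite scal_sum. apply sum_eq. intros i Hi.
      replace (S (S n') - S i)%nat with (S (S n' - S i)) by lia.
      simpl pow. ring.
  - destruct k as [|k'].
    + rewrite (sum_eq _ (fun _ => 0)). 2:{ intros; simpl; ring. }
      simpl INR. rewrite Rmult_0_l, Rplus_0_r.
      clear. induction n; simpl; [ring| rewrite IHn; ring].
    + rewrite scal_sum, <- sum_plus. apply sum_eq. intros i Hi.
      change (stir2 (S i) (S k')) with (S k' * stir2 i (S k') + stir2 i k')%nat. rewrite plus_INR, mult_INR. ring.
Qed.

Lemma Acoef_eq a n k : Acoef a n k = (-1) ^ (n + k) * INR (Stdlib.Arith.Factorial.fact k) * Ssum a n k.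
Proof. reflexivity. Qed.

Lemma Acoef_S0 a n : Acoef a (S n) 0 = INR n * (1 - a) * Acoef a n 0.
Proof.
  rewrite !Acoef_eq, Ssum_rec. rewrite !Nat.add_0_r. simpl pow. simpl INR. ring.
Qed.

Lemma Acoef_SS a n k : Acoef a (S n) (S k) =
  - (INR (S k) - INR n * (1 - a)) * Acoef a n (S k) + INR (S k) * Acoef a n k.
Proof.
  rewrite !Acoef_eq, Ssum_rec.
  replace (S n + S k)%nat with (S (S (n + k))) by lia.
  replace (n + S k)%nat with (S (n + k)) by lia.
  change (Stdlib.Arith.Factorial.fact (S k)) with (S k * Stdlib.Arith.Factorial.fact k)%nat. rewrite mult_INR.
  simpl pow. ring.
Qed.

Lemma Acoef_top a n : Acoef a n (S n) = 0.
Proof.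
  rewrite Acoef_eq. unfold Ssum. rewrite (sum_eq _ (fun _ => 0)).
  - clear. replace (sum_f_R0 (fun _ : nat => 0) n) with 0. ring.
    induction n; simpl; [ring| rewrite <- IHn; ring].
  - intros i Hi. rewrite stir2_big by lia. simpl; ring.
Qed.

Lemma Acoef_n0 a n : (1 <= n)%nat -> Acoef a n 0 = 0.
Proof.
  intros Hn. rewrite Acoef_eq. unfold Ssum. rewrite (sum_eq _ (fun _ => 0)).
  - clear. replace (sum_f_R0 (fun _ : nat => 0) n) with 0. ring.
    induction n; simpl; [ring| rewrite <- IHn; ring].
  - intros i Hi. destruct i. + destruct n; [lia|]. simpl; ring. + simpl; ring.
Qed.

Lemma Acoef_00 a : Acoef a 0 0 = 1.
Proof. rewrite Acoef_eq. unfold Ssum. simpl. ring. Qed.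

Lemma t1 (c e0 : R) j : is_derive (fun e => (c+e)^(j+1)) e0 (INR (j+1) * (c+e0)^j).
Proof. auto_derive. auto. rewrite Nat.add_1_r. simpl pred. ring. Qed.

Lemma t2 (ca : R) x : ca <> 0 -> is_derive (fun y => 1 - (-y)/ca) x (1/ca).
Proof. intros. auto_derive. auto. field. auto. Qed.

Definition Ef (a c y : R) := expac a c (- y).
Definition uf (a c y : R) := 1 - (- y) / calpha a c.
Definition interior (a c x : R) := a = 1 \/ (a <> 1 /\ 0 < uf a c x).


Lemma calpha_neq a c : a <> 1 -> calpha a c <> 0.
Proof.
  intros Ha. unfold calpha. apply Rmult_integral_contrapositive; split.
  - unfold Rdiv; rewrite Rmult_1_l; apply Rinv_neq_0_compat; lra.
  - apply Rgt_not_eq, Rpower_pos'.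
Qed.

Lemma Ef_ne1 a c y : a <> 1 -> Ef a c y = c * rpow (uf a c y) (1 / (1 - a)).
Proof. intros Ha. unfold Ef, expac, uf. destruct (Req_EM_T a 1); [lra|auto]. Qed.

Lemma Ef_1 a c y : a = 1 -> Ef a c y = c * exp (- y).
Proof. intros Ha. unfold Ef, expac. destruct (Req_EM_T a 1); [auto|lra]. Qed.

Lemma Ef_pos a c x : 0 < c -> interior a c x -> 0 < Ef a c x.
Proof.
  intros Hc [Ha|[Ha Hu]].
  - rewrite Ef_1 by auto. apply Rmult_lt_0_compat; auto; apply exp_pos.
  - rewrite Ef_ne1 by auto. rewrite rpow_pos by auto.
    apply Rmult_lt_0_compat; auto; apply Rpower_pos'.
Qed.

Lemma dE a c x : 0 < c -> interior a c x ->
  is_derive (Ef a c) x (- rpow (Ef a c x) a).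
Proof.
  intros Hc Hi. pose proof (Ef_pos a c x Hc Hi) as HE.
  destruct Hi as [Ha|[Ha Hu]].
  - apply is_derive_ext with (fun y => c * exp (- y)).
    { intros; now rewrite Ef_1. }
    rewrite rpow_pos by auto. subst a. rewrite Rpower_1 by auto. rewrite Ef_1 by auto.
    auto_derive; auto. ring.
  - apply is_derive_ext with (fun y => c * rpow (uf a c y) (1 / (1 - a))).
    { intros; now rewrite Ef_ne1. }
    set (p := 1 / (1 - a)).
    apply is_derive_eq with (1 / calpha a c * (c * (p * rpow (uf a c x) (p - 1)))).
    + apply (dcomp (fun e => c * rpow e p) (uf a c)).
      * apply is_derive_scal. now apply d_rpow.
      * apply t2. now apply calpha_neq.
    + rewrite Ef_ne1 by auto. fold p. rewrite !(rpow_pos (uf a c x)) by auto.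
      rewrite (rpow_pos (c * _)) by (apply Rmult_lt_0_compat; auto; apply Rpower_pos').
      rewrite <- Rpower_mult_distr by (auto; apply Rpower_pos').
      rewrite Rpower_mult.
      replace (p - 1) with (p * a) by (unfold p; field; lra).
      unfold calpha.
      replace (c * (p * Rpower (uf a c x) (p * a))) with
        (Rpower c (1 - a + a) * (p * Rpower (uf a c x) (p * a))).
      2:{ replace (1 - a + a) with 1 by ring. now rewrite Rpower_1. }
      rewrite Rpower_plus. unfold p. match goal with |- ?u = ?v => change (@eq R u v) end. field.
      repeat split; try lra; try (apply Rgt_not_eq, Rpower_pos').
Qed.

Definition G (a c : R) (n j : nat) (y : R) :=
  c * rpow (Ef a c y) (INR j - INR n * (1 - a)) / (c + Ef a c y) ^ (j + 1).

Lemma dG a c n j x : 0 < c -> interior a c x ->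
  is_derive (G a c n j) x
    (- (INR j - INR n * (1 - a)) * G a c (S n) j x + INR (S j) * G a c (S n) (S j) x).
Proof.
  intros Hc Hi. pose proof (Ef_pos a c x Hc Hi) as HE.
  set (m := INR j - INR n * (1 - a)).
  set (g := fun e => c * rpow e m / (c + e) ^ (j + 1)).
  apply is_derive_ext with (fun y => g (Ef a c y)). { intros; reflexivity. }
  set (e0 := Ef a c x) in *.
  assert (Hg : is_derive g e0 ((c * (m * rpow e0 (m - 1)) * (c + e0) ^ (j + 1)
        - c * rpow e0 m * (INR (j + 1) * (c + e0) ^ j)) / ((c + e0) ^ (j + 1)) ^ 2)).
  { apply (is_derive_div (fun e => c * rpow e m) (fun e => (c + e) ^ (j + 1))).
    - apply is_derive_scal. now apply d_rpow.
    - apply t1.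
    - apply pow_nonzero. lra. }
  eapply is_derive_eq. { apply (dcomp g (Ef a c)); [exact Hg | now apply dE]. }
  fold e0. unfold G. fold e0.
  replace (INR j - INR (S n) * (1 - a)) with ((m - 1) + a) by (unfold m; rewrite S_INR; ring).
  replace (INR (S j) - INR (S n) * (1 - a)) with (m + a) by (unfold m; rewrite !S_INR; ring).
  rewrite !rpow_pos by auto. rewrite !Rpower_plus.
  rewrite !Nat.add_1_r. simpl pow. rewrite S_INR.
  match goal with |- ?u = ?v => change (@eq R u v) end.
  field. split; [|lra]. apply pow_nonzero; lra.
Qed.


Lemma is_derive_sum (f : nat -> R -> R) (df : nat -> R) N x :
  (forall j, (j <= N)%nat -> is_derive (f j) x (df j)) ->
  is_derive (fun y => sum_f_R0 (fun j => f j y) N) x (sum_f_R0 df N).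
Proof.
  induction N; intros Hd.
  - simpl. apply Hd; lia.
  - simpl. apply dplus. apply IHN; intros; apply Hd; lia. apply Hd; lia.
Qed.

Definition HH (a c : R) (n : nat) (y : R) :=
  sum_f_R0 (fun j => Acoef a n j * G a c n j y) n.

Lemma dH a c n x : 0 < c -> interior a c x ->
  is_derive (HH a c n) x (HH a c (S n) x).
Proof.
  intros Hc Hi. unfold HH at 1.
  eapply is_derive_eq.
  { apply (is_derive_sum (fun j y => Acoef a n j * G a c n j y)).
    intros j _. apply is_derive_scal. now apply dG. }
  set (Gj := fun j => G a c (S n) j x).
  change (sum_f_R0 (fun j => Acoef a n j * (- (INR j - INR n * (1 - a)) * Gj j + INR (S j) * Gj (S j))) n
    = sum_f_R0 (fun j => Acoef a (S n) j * Gj j) (S n)).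
  rewrite (decomp_sum _ (S n)) by lia. simpl pred.
  rewrite (sum_eq _ (fun j => (Acoef a n j * (- (INR j - INR n * (1 - a))) * Gj j) + INR (S j) * Acoef a n j * Gj (S j)))
    by (intros; ring).
  rewrite sum_plus.
  set (f := fun j => Acoef a n j * (- (INR j - INR n * (1 - a))) * Gj j).
  assert (Hf : sum_f_R0 f n = f 0%nat + sum_f_R0 (fun j => f (S j)) n).
  { transitivity (sum_f_R0 f (S n)).
    - rewrite tech5. replace (f (S n)) with 0 by (unfold f; rewrite Acoef_top; ring). ring.
    - apply decomp_sum; lia. }
  rewrite Hf. rewrite Acoef_S0.
  rewrite (sum_eq (fun i => Acoef a (S n) (S i) * Gj (S i))
     (fun j => f (S j) + INR (S j) * Acoef a n j * Gj (S j))).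
  2:{ intros i _. rewrite Acoef_SS. unfold f. ring. }
  rewrite sum_plus. unfold f at 1. simpl INR. ring.
Qed.

Lemma Rpower_small b e q : 0 < e -> 0 < q -> 0 <= b -> b < Rpower e (1 / q) -> rpow b q < e.
Proof.
  intros He Hq Hb Hlt. destruct (Req_dec b 0) as [->|Hb0].
  - unfold rpow. destruct (Rlt_dec 0 0); lra.
  - rewrite rpow_pos by lra.
    replace e with (Rpower (Rpower e (1 / q)) q).
    + apply Rlt_Rpower_l; lra.
    + rewrite Rpower_mult. replace (1 / q * q) with 1 by (field; lra). now rewrite Rpower_1.
Qed.

Lemma deriv0 (f : R -> R) x0 K r q : 0 <= K -> 0 < r -> 1 < q ->
  (forall y, Rabs (f y - f x0) <= K * rpow (Rabs (y - x0) * r) q) -> is_derive f x0 0.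
Proof.
  intros HK Hr Hq Hb. apply is_derive_Reals. intros eps Heps.
  set (M := K * Rpower r q + 1).
  assert (HM : 0 < M). { unfold M. pose proof (Rpower_pos' r q). nra. }
  assert (Hd : 0 < Rpower (eps / M) (1 / (q - 1))) by apply Rpower_pos'.
  exists (mkposreal _ Hd). intros h Hh0 Hh. simpl in Hh.
  replace (x0 + h - x0) with h in Hb by ring.
  specialize (Hb (x0 + h)). replace (x0 + h - x0) with h in Hb by ring.
  assert (Hah : 0 < Rabs h) by (apply Rabs_pos_lt; auto).
  rewrite rpow_pos in Hb by (apply Rmult_lt_0_compat; auto).
  rewrite <- Rpower_mult_distr in Hb by auto.
  replace (Rpower (Rabs h) q) with (Rpower (Rabs h) (q - 1) * Rabs h) in Hb.
  2:{ replace q with ((q - 1) + 1) at 2 by ring. rewrite Rpower_plus, Rpower_1; auto. }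
  assert (Hs : rpow (Rabs h) (q - 1) < eps / M).
  { apply Rpower_small; try lra. apply Rdiv_lt_0_compat; auto. }
  rewrite rpow_pos in Hs by auto.
  pose proof (Rpower_pos' (Rabs h) (q - 1)). pose proof (Rpower_pos' r q).
  rewrite Rminus_0_r. unfold Rdiv. rewrite Rabs_mult, Rabs_inv.
  apply Rle_lt_trans with (K * (Rpower r q * Rpower (Rabs h) (q - 1))).
  - apply Rmult_le_reg_r with (Rabs h); auto. rewrite Rmult_assoc, Rinv_l by lra.
    rewrite Rmult_1_r. eapply Rle_trans; [exact Hb|]. right; ring.
  - apply Rle_lt_trans with (M * Rpower (Rabs h) (q - 1)).
    + unfold M. nra.
    + apply Rmult_lt_reg_l with (/ M). apply Rinv_0_lt_compat; auto.
      rewrite <- Rmult_assoc, Rinv_l by lra. unfold Rdiv in Hs. lra.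
Qed.

Lemma cont0 (f : R -> R) x0 K r q : 0 <= K -> 0 < r -> 0 < q ->
  (forall y, Rabs (f y - f x0) <= K * rpow (Rabs (y - x0) * r) q) -> continuous f x0.
Proof.
  intros HK Hr Hq Hb. apply continuity_pt_filterlim.
  intros eps Heps.
  set (M := K + 1).
  assert (Hd : 0 < Rpower (eps / M) (1 / q) / r).
  { apply Rdiv_lt_0_compat; auto. apply Rpower_pos'. }
  exists (Rpower (eps / M) (1 / q) / r). split; auto.
  intros y [_ Hy]. simpl in *. unfold R_dist in *.
  eapply Rle_lt_trans; [apply Hb|].
  assert (Hs : rpow (Rabs (y - x0) * r) q < eps / M).
  { apply Rpower_small; try lra. unfold M; apply Rdiv_lt_0_compat; lra.
    apply Rmult_le_pos; [apply Rabs_pos|lra].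
    apply Rmult_lt_reg_r with (/ r). apply Rinv_0_lt_compat; auto.
    rewrite Rmult_assoc, Rinv_r, Rmult_1_r by lra. exact Hy. }
  pose proof (rpow_ge0 (Rabs (y - x0) * r) q).
  apply Rle_lt_trans with (M * rpow (Rabs (y - x0) * r) q).
  - unfold M; nra.
  - apply Rmult_lt_reg_l with (/ M). apply Rinv_0_lt_compat; unfold M; lra.
    rewrite <- Rmult_assoc, Rinv_l by (unfold M; lra). unfold Rdiv in Hs. lra.
Qed.

Lemma calpha_lt a c : a < 1 -> calpha a c < 0.
Proof.
  intros Ha. unfold calpha. pose proof (Rpower_pos' c (1 - a)).
  assert (1 / (a - 1) < 0). { unfold Rdiv; rewrite Rmult_1_l. apply Rinv_lt_0_compat; lra. }
  nra.
Qed.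

Lemma calpha_gt a c : 1 < a -> 0 < calpha a c.
Proof.
  intros Ha. unfold calpha. pose proof (Rpower_pos' c (1 - a)).
  assert (0 < 1 / (a - 1)). { unfold Rdiv; rewrite Rmult_1_l. apply Rinv_0_lt_compat; lra. }
  nra.
Qed.

Lemma uf_mul a c y : a <> 1 -> uf a c y * calpha a c = calpha a c + y.
Proof. intros Ha. unfold uf. field. now apply calpha_neq. Qed.

Lemma int_lt a c y : a < 1 -> (0 < uf a c y <-> y < - calpha a c).
Proof.
  intros Ha. pose proof (calpha_lt a c Ha). pose proof (uf_mul a c y ltac:(lra)).
  split; intros; nra.
Qed.

Lemma int_gt a c y : 1 < a -> (0 < uf a c y <-> - calpha a c < y).
Proof.
  intros Ha. pose proof (calpha_gt a c Ha). pose proof (uf_mul a c y ltac:(lra)).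
  split; intros; nra.
Qed.

Lemma uf_abs a c y : a <> 1 -> 0 < uf a c y ->
  uf a c y = Rabs (y - - calpha a c) * / Rabs (calpha a c).
Proof.
  intros Ha Hu. pose proof (calpha_neq a c Ha).
  replace (y - - calpha a c) with (uf a c y * calpha a c) by (rewrite uf_mul; auto; ring).
  rewrite Rabs_mult, Rmult_assoc, Rinv_r, Rmult_1_r by (apply Rabs_no_R0; auto).
  rewrite Rabs_pos_eq; lra.
Qed.

Lemma Fnk_G a c n j y : Fnk a c n j y = Acoef a n j * G a c n j y.
Proof. unfold Fnk, G, Ef. unfold Rdiv. ring. Qed.

Lemma in_dom_int a c y : interior a c y ->
  in_dom a c y = true /\ (1 < a -> y <> - calpha a c).
Proof.
  intros [Ha|[Ha Hu]].
  - unfold in_dom. destruct (Req_EM_T a 1); [|lra]. split; auto; lra.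
  - unfold in_dom. destruct (Req_EM_T a 1); [lra|].
    destruct (Rlt_dec a 1).
    + apply int_lt in Hu; auto. destruct (Rle_dec y (- calpha a c)); [|lra]. split; auto; lra.
    + assert (1 < a) by lra. apply int_gt in Hu; auto.
      destruct (Rle_dec (- calpha a c) y); [|lra]. split; auto; lra.
Qed.

Definition D (a c : R) (k : nat) : R -> R :=
  match k with O => sigtron a c | S _ => nth_deriv_formula a c k end.

Lemma H0_eq a c y : 0 < c -> interior a c y -> HH a c 0 y = c / (c + Ef a c y).
Proof.
  intros Hc Hi. pose proof (Ef_pos a c y Hc Hi).
  unfold HH, G. simpl sum_f_R0. rewrite Acoef_00.
  simpl INR. replace (0 - 0 * (1 - a)) with 0 by ring.
  rewrite rpow_pos by auto. rewrite Rpower_O by auto. field. lra.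
Qed.

Lemma H_S a c k y : HH a c (S k) y = sum_f_R0 (fun j => Fnk a c (S k) (S j) y) k.
Proof.
  unfold HH. rewrite decomp_sum by lia. simpl pred. rewrite Acoef_n0 by lia.
  rewrite Rmult_0_l, Rplus_0_l. apply sum_eq. intros; now rewrite Fnk_G.
Qed.

Lemma D_int a c k y : 0 < c -> interior a c y -> D a c k y = HH a c k y.
Proof.
  intros Hc Hi. destruct (in_dom_int a c y Hi) as [Hd Hne].
  destruct k as [|k].
  - rewrite H0_eq by auto. simpl. unfold sigtron. rewrite Hd. unfold sigma_ac.
    destruct (Rlt_dec 1 a).
    + destruct (Req_EM_T y (- calpha a c)); [exfalso; now apply Hne|]. reflexivity.
    + reflexivity.
  - simpl D. unfold nth_deriv_formula. rewrite Hd. rewrite H_S.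
    replace (S k - 1)%nat with k by lia.
    destruct (Rlt_dec 1 a); auto.
    destruct (Req_EM_T y (- calpha a c)); [exfalso; now apply Hne|]. reflexivity.
Qed.

Definition bv (a : R) (k : nat) : R :=
  match k with O => if Rlt_dec a 1 then 1 else 0 | S _ => 0 end.

Lemma sum_zero n : sum_f_R0 (fun _ => 0) n = 0.
Proof. induction n; simpl; [ring| rewrite IHn; ring]. Qed.

Lemma rpow_0 e : rpow 0 e = 0.
Proof. unfold rpow. destruct (Rlt_dec 0 0); lra. Qed.

Lemma D_outer a c k y : 0 < c -> a <> 1 -> ~ (0 < uf a c y) -> D a c k y = bv a k.
Proof.
  intros Hc Ha Hu. pose proof (calpha_neq a c Ha) as Hca.
  pose proof (uf_mul a c y Ha) as Hm.
  destruct (Rlt_dec a 1) as [Hlt|Hge].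
  - pose proof (calpha_lt a c Hlt).
    assert (Hy : - calpha a c <= y) by (rewrite int_lt in Hu; auto; lra).
    destruct (Req_dec y (- calpha a c)) as [Heq|Hne].
    + assert (Hu0 : uf a c y = 0).
      { apply Rmult_eq_reg_r with (calpha a c); auto. rewrite Hm, Heq; ring. }
      assert (HE : Ef a c y = 0) by (rewrite Ef_ne1, Hu0, rpow_0 by auto; ring).
      assert (Hd : in_dom a c y = true).
      { unfold in_dom. destruct (Req_EM_T a 1); [lra|]. destruct (Rlt_dec a 1); [|lra].
        destruct (Rle_dec y (- calpha a c)); [auto|lra]. }
      destruct k as [|k].
      * simpl. unfold sigtron. rewrite Hd. unfold sigma_ac.
        destruct (Rlt_dec 1 a); [lra|]. destruct (Rlt_dec a 1); [|lra].
        change (expac a c (- y)) with (Ef a c y). rewrite HE. field. lra.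
      * simpl D. unfold nth_deriv_formula. rewrite Hd. destruct (Rlt_dec 1 a); [lra|].
        simpl bv. rewrite <- (sum_zero (S k - 1)). apply sum_eq. intros i _.
        rewrite Fnk_G. unfold G. rewrite HE, rpow_0. unfold Rdiv. ring.
    + assert (Hd : in_dom a c y = false).
      { unfold in_dom. destruct (Req_EM_T a 1); [lra|]. destruct (Rlt_dec a 1); [|lra].
        destruct (Rle_dec y (- calpha a c)); [lra|auto]. }
      destruct k as [|k].
      * simpl. unfold sigtron. rewrite Hd. unfold heaviside.
        destruct (Rle_dec 0 y); [|lra]. destruct (Rlt_dec a 1); [auto|lra].
      * simpl D. unfold nth_deriv_formula. rewrite Hd. reflexivity.
  - assert (Hgt : 1 < a) by lra. pose proof (calpha_gt a c Hgt).
    assert (Hy : y <= - calpha a c) by (rewrite int_gt in Hu; auto; lra).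
    destruct (Req_dec y (- calpha a c)) as [Heq|Hne].
    + assert (Hd : in_dom a c y = true).
      { unfold in_dom. destruct (Req_EM_T a 1); [lra|]. destruct (Rlt_dec a 1); [lra|].
        destruct (Rle_dec (- calpha a c) y); [auto|lra]. }
      destruct k as [|k].
      * simpl. unfold sigtron. rewrite Hd. unfold sigma_ac.
        destruct (Rlt_dec 1 a); [|lra]. destruct (Req_EM_T y (- calpha a c)); [|lra].
        destruct (Rlt_dec a 1); [lra|auto].
      * simpl D. unfold nth_deriv_formula. rewrite Hd. destruct (Rlt_dec 1 a); [|lra].
        destruct (Req_EM_T y (- calpha a c)); [|lra]. reflexivity.
    + assert (Hd : in_dom a c y = false).
      { unfold in_dom. destruct (Req_EM_T a 1); [lra|]. destruct (Rlt_dec a 1); [lra|].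
        destruct (Rle_dec (- calpha a c) y); [lra|auto]. }
      destruct k as [|k].
      * simpl. unfold sigtron. rewrite Hd. unfold heaviside.
        destruct (Rle_dec 0 y); [lra|]. destruct (Rlt_dec a 1); [lra|auto].
      * simpl D. unfold nth_deriv_formula. rewrite Hd. reflexivity.
Qed.

Lemma Ef_pow a c y s : 0 < c -> a <> 1 -> 0 < uf a c y ->
  Rpower (Ef a c y) s = Rpower c s * Rpower (uf a c y) (s / (1 - a)).
Proof.
  intros Hc Ha Hu. rewrite Ef_ne1, rpow_pos by auto.
  rewrite <- Rpower_mult_distr by (auto; apply Rpower_pos').
  rewrite Rpower_mult. f_equal. f_equal. field. lra.
Qed.

Lemma div_le x b e d : 0 < b -> 0 < d -> x * d <= e * b -> x / b <= e / d.
Proof.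
  intros Hb Hd H. replace (x / b) with ((x * d) * / (b * d)) by (field; lra).
  replace (e / d) with ((e * b) * / (b * d)) by (field; lra).
  apply Rmult_le_compat_r; auto. left; apply Rinv_0_lt_compat; nra.
Qed.

Definition Ck (a c : R) (k : nat) : R :=
  if Rlt_dec a 1 then Rpower c (1 - INR k * (1 - a)) / c
  else c * Rpower c (INR k * (a - 1) - 1).

Definition qk (a : R) (k : nat) : R := 1 / Rabs (1 - a) - INR k.

Lemma Ck_ge0 a c k : 0 < c -> 0 <= Ck a c k.
Proof.
  intros Hc. unfold Ck. destruct (Rlt_dec a 1).
  - left. apply Rdiv_lt_0_compat; auto. apply Rpower_pos'.
  - left. apply Rmult_lt_0_compat; auto. apply Rpower_pos'.
Qed.

Lemma G_bound a c k j y : 0 < c -> a <> 1 -> 0 < uf a c y -> (1 <= j)%nat ->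
  Rabs (G a c k j y) <= Ck a c k * Rpower (uf a c y) (qk a k).
Proof.
  intros Hc Ha Hu Hj.
  assert (Hi : interior a c y) by (right; auto).
  pose proof (Ef_pos a c y Hc Hi) as HE.
  assert (HG : 0 <= G a c k j y).
  { unfold G. apply Rmult_le_pos. apply Rmult_le_pos; [lra|apply rpow_ge0].
    left; apply Rinv_0_lt_compat, pow_lt; lra. }
  rewrite Rabs_pos_eq by auto.
  unfold G, Ck, qk. rewrite rpow_pos by auto.
  set (E := Ef a c y) in *.
  destruct (Rlt_dec a 1) as [Hlt|Hge].
  - destruct j as [|j']; [lia|].
    replace (INR (S j') - INR k * (1 - a)) with ((1 - INR k * (1 - a)) + INR j') by (rewrite S_INR; ring).
    rewrite Rpower_plus, Rpower_pow by auto.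
    set (s := 1 - INR k * (1 - a)).
    assert (Hs : Rpower E s / c = Rpower c s / c * Rpower (uf a c y) (1 / Rabs (1 - a) - INR k)).
    { unfold E. rewrite Ef_pow by auto. rewrite Rabs_pos_eq by lra.
      replace (s / (1 - a)) with (1 / (1 - a) - INR k) by (unfold s; field; lra). field. lra. }
    rewrite <- Hs. clear Hs.
    replace (S j' + 1)%nat with (j' + 2)%nat by lia. rewrite pow_add.
    pose proof (Rpower_pos' E s) as HP.
    assert (HX : E ^ j' <= (c + E) ^ j') by (apply pow_incr; lra).
    assert (HY : 0 < (c + E) ^ j') by (apply pow_lt; lra).
    apply div_le; auto. apply Rmult_lt_0_compat; auto. apply pow_lt; lra.
    assert (H1 : 0 <= Rpower E s * ((c + E) ^ j' - E ^ j') * c ^ 2).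
    { apply Rmult_le_pos. apply Rmult_le_pos; lra. nra. }
    assert (H2 : 0 <= Rpower E s * (c + E) ^ j' * ((c + E) ^ 2 - c ^ 2)).
    { apply Rmult_le_pos. apply Rmult_le_pos; lra. simpl. nra. }
    simpl pow in *. nra.
  - replace (INR j - INR k * (1 - a)) with ((INR k * (a - 1) - 1) + INR (j + 1)) by (rewrite plus_INR; simpl; ring).
    rewrite Rpower_plus, Rpower_pow by auto.
    set (s := INR k * (a - 1) - 1).
    assert (Hs : c * Rpower E s = c * Rpower c s * Rpower (uf a c y) (1 / Rabs (1 - a) - INR k)).
    { unfold E. rewrite Ef_pow by auto. rewrite Rabs_left by lra.
      replace (s / (1 - a)) with (1 / - (1 - a) - INR k) by (unfold s; field; lra). ring. }
    rewrite <- Hs. clear Hs.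
    pose proof (Rpower_pos' E s) as HP.
    assert (HX : E ^ (j + 1) <= (c + E) ^ (j + 1)) by (apply pow_incr; lra).
    assert (HY : 0 < (c + E) ^ (j + 1)) by (apply pow_lt; lra).
    replace (c * Rpower E s) with (c * Rpower E s / 1) by field.
    apply div_le; auto. lra.
    assert (0 <= c * Rpower E s * ((c + E) ^ (j + 1) - E ^ (j + 1))).
    { apply Rmult_le_pos; [nra|lra]. }
    nra.
Qed.

Definition Kb (a c : R) (k : nat) : R :=
  match k with O => 1 | S _ => sum_f_R0 (fun j => Rabs (Acoef a k j)) k * Ck a c k end.

Lemma Kb_ge0 a c k : 0 < c -> 0 <= Kb a c k.
Proof.
  intros Hc. destruct k; unfold Kb. lra.
  apply Rmult_le_pos; [|now apply Ck_ge0].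
  apply cond_pos_sum. intros; apply Rabs_pos.
Qed.

Lemma D_bound_int a c k y : 0 < c -> a <> 1 -> 0 < uf a c y ->
  Rabs (D a c k y - bv a k) <= Kb a c k * Rpower (uf a c y) (qk a k).
Proof.
  intros Hc Ha Hu.
  assert (Hi : interior a c y) by (right; auto).
  pose proof (Ef_pos a c y Hc Hi) as HE.
  rewrite D_int by auto.
  destruct k as [|k].
  - rewrite H0_eq by auto. simpl Kb. simpl bv. rewrite Rmult_1_l.
    assert (HEe : Ef a c y = c * Rpower (uf a c y) (1 / (1 - a))) by (rewrite Ef_ne1, rpow_pos; auto).
    unfold qk. simpl INR. rewrite Rminus_0_r.
    destruct (Rlt_dec a 1).
    + rewrite (Rabs_pos_eq (1 - a)) by lra.
      replace (c / (c + Ef a c y) - 1) with (- (Ef a c y / (c + Ef a c y))) by (field; lra).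
      rewrite Rabs_Ropp, Rabs_pos_eq by (left; apply Rdiv_lt_0_compat; lra).
      apply Rle_trans with (Ef a c y / c).
      * apply div_le; lra || nra.
      * rewrite HEe. right. field. lra.
    + rewrite (Rabs_left (1 - a)) by lra. rewrite Rminus_0_r.
      rewrite Rabs_pos_eq by (left; apply Rdiv_lt_0_compat; lra).
      apply Rle_trans with (c / Ef a c y).
      * apply div_le; lra || nra.
      * rewrite HEe. replace (1 / - (1 - a)) with (- (1 / (1 - a))) by (field; lra).
        rewrite Rpower_Ropp. right. field. split; [apply Rgt_not_eq, Rpower_pos'|lra].
  - simpl bv. rewrite Rminus_0_r. unfold HH.
    eapply Rle_trans; [apply sum_f_R0_triangle|].
    unfold Kb. rewrite Rmult_assoc, (Rmult_comm (sum_f_R0 _ _)), scal_sum. apply sum_Rle. intros j Hj.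
    rewrite Rabs_mult. destruct j as [|j].
    + rewrite Acoef_n0 by lia. rewrite Rabs_R0, !Rmult_0_l. lra.
    + apply Rmult_le_compat_l; [apply Rabs_pos|]. apply G_bound; auto; lia.
Qed.

Lemma uf_mul_zero a c : a <> 1 -> uf a c (- calpha a c) = 0.
Proof. intros Ha. pose proof (calpha_neq a c Ha). unfold uf. rewrite Ropp_involutive. field. auto. Qed.

Lemma D_global_bound a c k y : 0 < c -> a <> 1 ->
  Rabs (D a c k y - D a c k (- calpha a c)) <=
  Kb a c k * rpow (Rabs (y - - calpha a c) * / Rabs (calpha a c)) (qk a k).
Proof.
  intros Hc Ha. pose proof (calpha_neq a c Ha) as Hca.
  rewrite (D_outer a c k (- calpha a c)) by (auto; rewrite uf_mul_zero by auto; lra).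
  destruct (Rlt_dec 0 (uf a c y)) as [Hu|Hu].
  - rewrite <- uf_abs by auto. rewrite rpow_pos by auto. now apply D_bound_int.
  - rewrite D_outer by auto. rewrite Rminus_diag, Rabs_R0.
    apply Rmult_le_pos; [now apply Kb_ge0|apply rpow_ge0].
Qed.

Lemma uf_diff a c x y : a <> 1 -> uf a c y - uf a c x = (y - x) / calpha a c.
Proof. intros Ha. pose proof (calpha_neq a c Ha). unfold uf. field. auto. Qed.

Lemma uf_loc a c x : a <> 1 -> uf a c x <> 0 ->
  locally x (fun y => Rabs (uf a c y - uf a c x) < Rabs (uf a c x)).
Proof.
  intros Ha Hx. pose proof (calpha_neq a c Ha) as Hca.
  apply locally_R with (Rabs (uf a c x) * Rabs (calpha a c)).
  - apply Rmult_lt_0_compat; apply Rabs_pos_lt; auto.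
  - intros y Hy. rewrite uf_diff by auto. unfold Rdiv. rewrite Rabs_mult, Rabs_inv.
    apply Rmult_lt_reg_r with (Rabs (calpha a c)). apply Rabs_pos_lt; auto.
    rewrite Rmult_assoc, Rinv_l, Rmult_1_r by (apply Rabs_no_R0; auto). exact Hy.
Qed.

Lemma deriv_step a c k x : 0 < c -> (a <> 1 -> 1 < qk a k) ->
  is_derive (D a c k) x (D a c (S k) x).
Proof.
  intros Hc Hq.
  destruct (Req_dec a 1) as [Ha|Ha].
  - assert (Hi : forall y, interior a c y) by (left; auto).
    rewrite D_int by auto.
    apply is_derive_ext with (HH a c k). { intros; rewrite D_int; auto. }
    now apply dH.
  - destruct (Req_dec x (- calpha a c)) as [Hx|Hx].
    + rewrite D_outer by (auto; rewrite Hx, uf_mul_zero by auto; lra). simpl bv.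
      rewrite Hx. apply deriv0 with (Kb a c k) (/ Rabs (calpha a c)) (qk a k).
      * now apply Kb_ge0.
      * apply Rinv_0_lt_compat, Rabs_pos_lt, calpha_neq; auto.
      * auto.
      * intros y. now apply D_global_bound.
    + assert (Hu0 : uf a c x <> 0).
      { intros H0. apply Hx. pose proof (uf_mul a c x Ha). rewrite H0 in H. lra. }
      pose proof (uf_loc a c x Ha Hu0) as Hl.
      destruct (Rlt_dec 0 (uf a c x)) as [Hu|Hu].
      * assert (Hi : interior a c x) by (right; auto).
        rewrite D_int by auto.
        apply is_derive_ext_loc with (HH a c k).
        -- eapply filter_imp; [|exact Hl]. intros y Hy. simpl in Hy.
           rewrite D_int; auto. right; split; auto.
           rewrite (Rabs_pos_eq (uf a c x)) in Hy by lra. apply Rabs_def2 in Hy. lra.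
        -- now apply dH.
      * rewrite D_outer by auto. simpl bv.
        apply is_derive_ext_loc with (fun _ => bv a k).
        -- eapply filter_imp; [|exact Hl]. intros y Hy. simpl in Hy.
           rewrite D_outer; auto.
           rewrite (Rabs_left (uf a c x)) in Hy by lra. apply Rabs_def2 in Hy. lra.
        -- apply dconst.
Qed.

Lemma cont_n a c n x : 0 < c -> (a <> 1 -> 0 < qk a n) -> continuous (D a c n) x.
Proof.
  intros Hc Hq.
  destruct (Req_dec a 1) as [Ha|Ha].
  - apply (@ex_derive_continuous R_AbsRing R_NormedModule (D a c n) x). exists (D a c (S n) x). apply deriv_step; auto. lra.
  - destruct (Req_dec x (- calpha a c)) as [Hx|Hx].
    + rewrite Hx. apply cont0 with (Kb a c n) (/ Rabs (calpha a c)) (qk a n).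
      * now apply Kb_ge0.
      * apply Rinv_0_lt_compat, Rabs_pos_lt, calpha_neq; auto.
      * auto.
      * intros y. now apply D_global_bound.
    + apply (@ex_derive_continuous R_AbsRing R_NormedModule (D a c n) x).
      assert (Hu0 : uf a c x <> 0).
      { intros H0. apply Hx. pose proof (uf_mul a c x Ha). rewrite H0 in H. lra. }
      pose proof (uf_loc a c x Ha Hu0) as Hl.
      destruct (Rlt_dec 0 (uf a c x)) as [Hu|Hu].
      * exists (HH a c (S n) x).
        apply is_derive_ext_loc with (HH a c n).
        -- eapply filter_imp; [|exact Hl]. intros y Hy. simpl in Hy.
           rewrite D_int; auto. right; split; auto.
           rewrite (Rabs_pos_eq (uf a c x)) in Hy by lra. apply Rabs_def2 in Hy. lra.
        -- apply dH; auto. right; auto.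
      * exists 0.
        apply is_derive_ext_loc with (fun _ => bv a n).
        -- eapply filter_imp; [|exact Hl]. intros y Hy. simpl in Hy.
           rewrite D_outer; auto.
           rewrite (Rabs_left (uf a c x)) in Hy by lra. apply Rabs_def2 in Hy. lra.
        -- apply dconst.
Qed.

Lemma qk_big a n : (1 <= n)%nat -> 1 - 1 / INR n < a -> a < 1 + 1 / INR n -> a <> 1 ->
  INR n < 1 / Rabs (1 - a).
Proof.
  intros Hn H1 H2 Ha.
  assert (Hn0 : 0 < INR n) by (apply lt_0_INR; lia).
  assert (Hab : Rabs (1 - a) < 1 / INR n).
  { apply Rabs_def1; lra. }
  assert (Hp : 0 < Rabs (1 - a)) by (apply Rabs_pos_lt; lra).
  replace (INR n) with (/ (1 / INR n)) by (field; lra).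
  unfold Rdiv at 2. rewrite Rmult_1_l.
  apply Rinv_lt_contravar; auto. apply Rmult_lt_0_compat; auto.
  apply Rdiv_lt_0_compat; lra.
Qed.

Theorem theorem2 (c a : R) (hc : 0 < c) (ha : 0 <= a) (n : nat) (hn : (1 <= n)%nat)
  (ha1 : 1 - 1 / INR n < a) (ha2 : a < 1 + 1 / INR n) :
  (forall (k : nat) (x : R), (k <= n)%nat -> ex_derive_n (sigtron a c) k x) /\
  (forall x : R, continuous (Derive_n (sigtron a c) n) x) /\
  (forall x : R, Derive_n (sigtron a c) n x = nth_deriv_formula a c n x).
Proof.
  assert (Hstep : forall k, (k < n)%nat -> forall x, is_derive (D a c k) x (D a c (S k) x)).
  { intros k Hk x. apply deriv_step; auto. intros Ha.
    pose proof (qk_big a n hn ha1 ha2 Ha). unfold qk.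
    assert (INR k + 1 <= INR n). { rewrite <- S_INR. apply le_INR. lia. }
    lra. }
  assert (HD : forall k, (k <= n)%nat -> forall x, Derive_n (sigtron a c) k x = D a c k x).
  { induction k; intros Hk x.
    - reflexivity.
    - simpl Derive_n. rewrite (Derive_ext _ (D a c k)) by (intros; apply IHk; lia).
      apply is_derive_unique. apply Hstep. lia. }
  split; [|split].
  - intros k x Hk. destruct k as [|k]; [exact I|]. simpl.
    apply ex_derive_ext with (D a c k). { intros; symmetry; apply HD; lia. }
    exists (D a c (S k) x). apply Hstep. lia.
  - intros x. apply continuous_ext with (D a c n). { intros; symmetry; apply HD; lia. }
    apply cont_n; auto. intros Ha.
    pose proof (qk_big a n hn ha1 ha2 Ha). unfold qk. lra.
  - intros x. rewrite HD by lia. destruct n; [lia|]. reflexivity.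
Qed.
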